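(* Under the setting in the context, the matrices $Q_\beta$, $V_\beta$, $K_\beta$ satisfy $$\det(I-t\,V_\beta)=\det(I-t\,Q_\beta)\,\det(I-t\,K_\beta).$$
   Context: Setting. Let $I\subset\mathbb{R}$ be a compact interval and $f_i(x)=\rho_ix+\varrho_i$ ($i=1,\dots,n$), $0<|\rho_i|<1$, an IFS with the open set condition. Assume $I$ is the union of a nonempty open interval $I_h$ (the hole) and $f_1(I),\dots,f_n(I)$, with pairwise disjoint interiors and $I_h$ disjoint from the $f_i(I)$. Let $F(x)=f_i^{-1}(x)$ on $f_i(I)$. The laps $I_1,\dots,I_n$ (the $f_i(I)$ in left-to-right order) and the hole have endpoints $a_1<\dots<a_{n+2}$, hole $=(a_h,a_{h+1})$; interior endpoints are the turning/discontinuity points. Assume the forward orbit of every one-sided endpoint $a_i^\pm$ is finite (periodic, eventually periodic, or falling into the hole). Markov partition and $Q_\beta$: the points of these orbits together with the $a_i$, ordered, cut $I$ into intervals $J_1,\dots,J_m$; $A=[a_{ij}]$, $a_{ij}=1$ iff $F(\mathrm{int}J_j)\supseteq\mathrm{int}J_i$; $Q_\beta=[a_{ij}|F'|_{J_j}|^{-\beta}]$, $\beta\in\mathbb{R}$. Points $y^{(i)}$: list, ordered along $I$, the one-sided endpoints $a_1^+,a_2^-,a_2^+,\dots,a_{n+1}^-,a_{n+1}^+,a_{n+2}^-$ (each $a_i^-,a_i^+$ as two consecutive entries, $a_i^-$ first) together with all other points of the forward orbits of these one-sided endpoints; call them $y^{(1)},\dots,y^{(q)}$ and identify $y^{(i)}$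 with the $i$-th standard basis vector of $\mathbb{R}^q$. $V_\beta=[v_{ij}]$ ($q\times q$): for each $j$, if $F(y^{(j)})=y^{(i)}$ put $v_{ij}=\varepsilon(y^{(j)})|F'(y^{(j)})|^{-\beta}$, $\varepsilon$ the sign of $F'$ at $y^{(j)}$ (the column is zero if $y^{(j)}$ is a limit from inside the hole). Further, for every pair of consecutive entries that are the two one-sided versions of a turning/discontinuity point lying between $y^{(j)}$ and $y^{(i)}$: if $y^{(i)}>y^{(j)}$ and the pair is $y^{(k)},y^{(k+1)}$ with $j\le k<i$, put $v_{kj}=v_{ij}$, $v_{k+1,j}=-v_{ij}$; if $y^{(i)}<y^{(j)}$ and the pair is $y^{(k-1)},y^{(k)}$ with $i<k\le j$, put $v_{k-1,j}=-v_{ij}$, $v_{kj}=v_{ij}$. All other entries are $0$. $K_\beta$ is the $n\times n$ diagonal matrix with $k_{ii}=\varepsilon(I_i)|F'|_{I_i}|^{-\beta}$, $\varepsilon(I_i)$ the sign of $F'$ on lap $I_i$. *)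

(* Defs.v *)
From HB Require Import structures.
From mathcomp Require Import all_boot all_order all_algebra.
From mathcomp Require Import fingroup perm.
From mathcomp Require Import boolp classical_sets cardinality reals exp.
Set Implicit Arguments. Unset Strict Implicit. Unset Printing Implicit Defensive.
Import Order.TTheory GRing.Theory Num.Theory.
Local Open Scope ring_scope.
Local Open Scope classical_set_scope.

(* Conventions (0-based):
   I = [a 0, a n.+1]; endpoints a 0 < a 1 < ... < a n.+1 (paper: a_1<...<a_{n+2});
   hole = (a h, a h.+1);  laps k : 'I_n in left-to-right order;
   the IFS maps are f_i x = rho i * x + vrho i, i : 'I_n, and the permutation
   g says that lap k = f_(g k)(I).  One-sided points are pairs (x, s) with
   s = true meaning x^+ (right limit) and s = false meaning x^- (left limit). *)

Section Setting.
Variables (R : realType) (n h : nat) (a : nat -> R) (rho vrho : 'I_n -> R)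
  (g : {perm 'I_n}) (beta : R).

Definition lapli (k : 'I_n) : nat := if (k < h)%N then (k : nat) else k.+1.
Definition lapL (k : 'I_n) : R := a (lapli k).
Definition lapR (k : 'I_n) : R := a (lapli k).+1.

Definition fmap (i : 'I_n) (x : R) : R := rho i * x + vrho i.

(* branch of F on lap k : F = f_(g k)^-1 *)
Definition Fbr (k : 'I_n) (x : R) : R := (x - vrho (g k)) / rho (g k).
Definition Fder (k : 'I_n) : R := (rho (g k))^-1.
Definition wt (k : 'I_n) : R := Num.sg (Fder k) * (`|Fder k| `^ (- beta)).

(* the one-sided point p = (x,s) lies in lap k, i.e. its side-neighbourhood does *)
Definition inlapb (k : 'I_n) (p : R * bool) : bool :=
  [&& lapL k <= p.1, p.1 <= lapR k,
      p.2 ==> (p.1 < lapR k) & (~~ p.2) ==> (lapL k < p.1)].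
Definition lapof (p : R * bool) : option 'I_n := [pick k : 'I_n | inlapb k p].

(* image of a one-sided point under F (None: it lies in / is a limit from the hole) *)
Definition Fimg (k : 'I_n) (p : R * bool) : R * bool :=
  (Fbr k p.1, if 0 < Fder k then p.2 else ~~ p.2).
Definition Fstep (p : R * bool) : option (R * bool) :=
  if lapof p is Some k then Some (Fimg k p) else None.

Definition Fiterate (m : nat) (p : R * bool) : option (R * bool) :=
  iter m (obind Fstep) (Some p).
Definition Forbit (e : R * bool) : set (R * bool) :=
  [set p | exists m, Fiterate m e = Some p].

Definition osend (p : R * bool) : Prop :=
  (exists k, (0 < k <= n.+1)%N /\ p = (a k, false)) \/
  (exists k, (k <= n)%N /\ p = (a k, true)).

(* one-sided versions are only kept at the endpoints a_k; elsewhere a point is a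
   single entry (normalised to side true) *)
Definition is_a (x : R) : bool := has (fun k => x == a k) (iota 0%N n.+2).
Definition normp (p : R * bool) : R * bool := if is_a p.1 then p else (p.1, true).

(* the entries y^(i): one-sided endpoints and all points of their forward orbits *)
Definition Ent : set (R * bool) :=
  [set p | exists e p0, osend e /\ Forbit e p0 /\ p = normp p0].
(* the points cutting I into the Markov partition *)
Definition Pos : set R := [set x | exists p, Ent p /\ p.1 = x].

Definition lexlt (p p' : R * bool) : bool :=
  (p.1 < p'.1) || [&& p.1 == p'.1, ~~ p.2 & p'.2].

(* correction coming from the pair (a l^-, a l^+), for column entry yj with
   image im, evaluated at row entry yi *)
Definition corr (l : nat) (yi yj im : R * bool) : R :=
  let am := (a l, false) in let ap := (a l, true) in
  if lexlt yj im then
    (if ~~ lexlt am yj && lexlt am im then (yi == am)%:R - (yi == ap)%:R else 0)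
  else if lexlt im yj then
    (if lexlt im ap && ~~ lexlt yj ap then (yi == ap)%:R - (yi == am)%:R else 0)
  else 0.

Definition Vmx (q : nat) (y : nat -> R * bool) : 'M[R]_q :=
  \matrix_(i < q, j < q)
    match lapof (y j) with
    | None => 0
    | Some k =>
        let im := normp (Fimg k (y j)) in
        wt k * ((y i == im)%:R + \sum_(1 <= l < n.+1) corr l (y i) (y j) im)
    end.

(* lap containing the Markov interval J_j = [z j, z j.+1] (None: the hole) *)
Definition Jlap (z : nat -> R) (j : nat) : option 'I_n :=
  [pick k : 'I_n | (lapL k <= z j) && (z j.+1 <= lapR k)].

Definition Qmx (m : nat) (z : nat -> R) : 'M[R]_m :=
  \matrix_(i < m, j < m)
    match Jlap z j with
    | None => 0
    | Some k =>
        (asbool ([set x | z i < x < z i.+1]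
                   `<=` [set Fbr k x | x in [set x | z j < x < z j.+1]]))%:R
        * (`|Fder k| `^ (- beta))
    end.

Definition Kmx : 'M[R]_n := diag_mx (\row_(k < n) wt k).

End Setting.

(* Main.v *)
Require Import Defs.
From HB Require Import structures.
From mathcomp Require Import all_boot all_order all_algebra.
From mathcomp Require Import fingroup perm.
From mathcomp Require Import boolp classical_sets cardinality reals exp.
From mathcomp Require Import zify ring lra.
Set Implicit Arguments. Unset Strict Implicit. Unset Printing Implicit Defensive.
Import Order.TTheory GRing.Theory Num.Theory.
Local Open Scope ring_scope.
Local Open Scope classical_set_scope.


Lemma sylvester (R : comNzRingType) m k (A : 'M[R]_(m,k)) (B : 'M[R]_(k,m)) :
  \det (1%:M - A *m B) = \det (1%:M - B *m A).
Proof.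
have E1 : block_mx 1%:M A B 1%:M =
   block_mx 1%:M 0 B 1%:M *m block_mx 1%:M A 0 (1%:M - B *m A).
  rewrite mulmx_block !mul1mx !mulmx1 !mul0mx !addr0.
  by rewrite addrC subrK.
have E2 : block_mx 1%:M A B 1%:M =
   block_mx 1%:M A 0 1%:M *m block_mx (1%:M - A *m B) 0 B 1%:M.
  rewrite mulmx_block !mul1mx !mulmx1 !mul0mx ?mulmx0 ?addr0 ?add0r.
  by rewrite subrK.
have := congr1 determinant E1; rewrite E2 !det_mulmx => H.
by rewrite !det_lblock !det_ublock !det1 !mul1r !mulr1 in H.
Qed.

Lemma sum_pairs (R : nmodType) (F : nat -> R) N :
  \sum_(j < N.*2) F j = \sum_(c < N) (F c.*2 + F c.*2.+1).
Proof.
elim: N => [|N IH]; first by rewrite !big_ord0.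
by rewrite doubleS !big_ord_recr /= IH addrA.
Qed.

Lemma sum_ind (R : pzSemiRingType) (F : nat -> R) a b c :
  \sum_(a <= l < b) ((l == c)%:R * F l) = (a <= c < b)%N%:R * F c.
Proof.
elim: b => [|b IH].
  by rewrite big_geq // ltn0 andbF mul0r.
case: (leqP a b) => hab.
  rewrite big_nat_recr //= IH.
  case: (eqVneq b c) => [eb|hbc].
    by rewrite -eb ltnn andbF hab ltnSn /= mulr0n mul0r add0r mul1r.
  rewrite /= mulr0n mul0r addr0.
  have -> : (a <= c < b.+1)%N = (a <= c < b)%N.
    by apply/idP/idP => /andP[? ?]; apply/andP; split; lia.
  by [].
rewrite big_geq //.
have -> : (a <= c < b.+1)%N = false by apply/negbTE; apply/negP => /andP [h1 h2]; lia.
by rewrite mul0r.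
Qed.

Lemma enum_unique (T : Type) (lt : T -> T -> bool) (f g : nat -> T) (N M : nat) :
  (forall x, ~~ lt x x) -> (forall x y z, lt x y -> lt y z -> lt x z) ->
  (forall i j, (i < j < N)%N -> lt (f i) (f j)) ->
  (forall i j, (i < j < M)%N -> lt (g i) (g j)) ->
  (forall x, (exists2 i, (i < N)%N & f i = x) <-> (exists2 i, (i < M)%N & g i = x)) ->
  N = M /\ (forall i, (i < N)%N -> f i = g i).
Proof.
move=> irr tr sf sg img.
have key : forall i, (i < N)%N -> (i < M)%N -> f i = g i.
  elim/ltn_ind => i IH iN iM.
  have [k kM fk] : exists2 k, (k < M)%N & g k = f i by apply/img; exists i.
  case: (ltngtP k i) => hki; last by rewrite -fk hki.
  - have := sf k i; rewrite hki iN /= => /(_ isT).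
    have kN : (k < N)%N by apply: ltn_trans hki iN.
    by rewrite IH // fk (negbTE (irr _)).
  - have [k' k'N gk'] : exists2 k', (k' < N)%N & f k' = g i by apply/img; exists i.
    case: (ltngtP k' i) => hk'i; last by rewrite -gk' hk'i.
    + have := sg k' i; rewrite hk'i iM /= => /(_ isT).
      have kM' : (k' < M)%N by apply: ltn_trans hk'i iM.
      by rewrite -IH // gk' (negbTE (irr _)).
    + have h1 : lt (f i) (f k') by apply: sf; rewrite hk'i.
      have h2 : lt (g i) (g k) by apply: sg; rewrite hki.
      rewrite -gk' fk in h2.
      by have := irr (f i); rewrite (tr _ _ _ h1 h2).
have NM : N = M.
  apply/eqP; rewrite eqn_leq; apply/andP; split; rewrite leqNgt; apply/negP => H.
  - have [k kM gk] : exists2 k, (k < M)%N & g k = f M by apply/img; exists M.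
    have := sf k M; rewrite kM H /= => /(_ isT).
    have kN : (k < N)%N by apply: ltn_trans kM H.
    by rewrite key // gk (negbTE (irr _)).
  - have [k kN gk] : exists2 k, (k < N)%N & f k = g N by apply/img; exists N.
    have := sg k N; rewrite kN H /= => /(_ isT).
    have kM : (k < M)%N by apply: ltn_trans kN H.
    by rewrite -key // gk (negbTE (irr _)).
split => // i iN; apply: key => //; by rewrite -NM.
Qed.


Lemma a_lt (R : realType) n (a : nat -> R) :
  (forall i, (i <= n)%N -> a i < a i.+1) ->
  forall i j, (i < j)%N -> (j <= n.+1)%N -> a i < a j.
Proof.
move=> Ha i; elim=> // j IH ij jn.
rewrite ltnS leq_eqVlt in ij; case/orP: ij => [/eqP ->|ij]; first by apply: Ha; lia.
by apply: lt_trans (IH ij _) (Ha j _); lia.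
Qed.

Lemma a_ltE (R : realType) n (a : nat -> R) :
  (forall i, (i <= n)%N -> a i < a i.+1) ->
  forall i j, (i <= n.+1)%N -> (j <= n.+1)%N -> (a i < a j) = (i < j)%N.
Proof.
move=> Ha i j hi hj; case: (ltngtP i j) => hij.
- by rewrite (a_lt Ha).
- by apply/negbTE; rewrite -leNgt; apply/ltW; apply: (a_lt Ha).
- by rewrite hij ltxx.
Qed.

Lemma a_leE (R : realType) n (a : nat -> R) :
  (forall i, (i <= n)%N -> a i < a i.+1) ->
  forall i j, (i <= n.+1)%N -> (j <= n.+1)%N -> (a i <= a j) = (i <= j)%N.
Proof. by move=> Ha i j hi hj; rewrite leNgt (a_ltE Ha) // -leqNgt. Qed.

Lemma a_eqE (R : realType) n (a : nat -> R) :
  (forall i, (i <= n)%N -> a i < a i.+1) ->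
  forall i j, (i <= n.+1)%N -> (j <= n.+1)%N -> (a i == a j) = (i == j).
Proof. by move=> Ha i j hi hj; rewrite eq_le !(a_leE Ha) // -eqn_leq. Qed.

Lemma lapli_bump n h (k : 'I_n) : lapli h k = bump h k.
Proof. rewrite /lapli /bump; case: ltnP => hk; lia. Qed.

Lemma lapli_le n h (k : 'I_n) : (h <= n)%N -> (lapli h k <= n)%N.
Proof. rewrite /lapli; case: ltnP => hk; have := ltn_ord k; lia. Qed.

Lemma lapli_neq n h (k : 'I_n) : lapli h k != h.
Proof. rewrite /lapli; case: ltnP => hk; lia. Qed.

Lemma lapli_inj n h (k1 k2 : 'I_n) : lapli h k1 = lapli h k2 -> k1 = k2.
Proof. rewrite /lapli => E; apply: val_inj => /=; move: E; case: (ltnP k1 h); case: (ltnP k2 h); lia. Qed.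

Definition cl n h (c : nat) : option 'I_n := [pick k : 'I_n | lapli h k == c].
Arguments cl {n} h c.

Lemma clE n h (k : 'I_n) : cl h (lapli h k) = Some k.
Proof.
rewrite /cl; case: pickP => [k' /eqP E|/(_ k)]; last by rewrite eqxx.
by rewrite (lapli_inj E).
Qed.

Lemma cl_some n h c (k : 'I_n) : cl h c = Some k -> lapli h k = c.
Proof. by rewrite /cl; case: pickP => // k' /eqP E [<-]. Qed.

Lemma cl_none n h c : (h < n)%N -> (c <= n)%N -> @cl n h c = None -> c = h.
Proof.
move=> hn cn; rewrite /cl; case: pickP => // H _.
case: (eqVneq c h) => // hc; exfalso.
case: (ltnP c h) => ch.
  have ck : (c < n)%N by lia.
  by have := H (Ordinal ck); rewrite /lapli /= ch eqxx.
have ck : (c.-1 < n)%N by lia.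
have := H (Ordinal ck); rewrite /lapli /=.
have -> : (c.-1 < h)%N = false by apply/negbTE; lia.
have -> : c.-1.+1 = c by lia.
by rewrite eqxx.
Qed.

Definition yexp (R : realType) (a : nat -> R) (i : nat) : R * bool :=
  (a (odd i + i./2)%N, ~~ odd i).

Lemma half_bound i n : (i < (n.+1).*2)%N -> (i./2 <= n)%N /\ (odd i + i./2 <= n.+1)%N.
Proof.
move=> hi; have := odd_double_half i; rewrite -addnn => E.
case: (odd i) E => /= E; lia.
Qed.

Lemma inlapb_yexp (R : realType) n h (a : nat -> R) (k : 'I_n) i :
  (forall i, (i <= n)%N -> a i < a i.+1) -> (h <= n)%N ->
  (i < (n.+1).*2)%N -> inlapb h a k (yexp a i) = (lapli h k == i./2).
Proof.
move=> Ha hn hi; have [h1 h2] := half_bound hi; have hl := lapli_le k hn.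
rewrite /inlapb /lapL /lapR /yexp /=.
rewrite !(a_leE Ha) ?(a_ltE Ha) //; try lia.
Qed.

Lemma lexlt_yexp (R : realType) n (a : nat -> R) i j :
  (forall i, (i <= n)%N -> a i < a i.+1) ->
  (i < (n.+1).*2)%N -> (j < (n.+1).*2)%N -> lexlt (yexp a i) (yexp a j) = (i < j)%N.
Proof.
move=> Ha hi hj; have [_ h2] := half_bound hi; have [_ h3] := half_bound hj.
rewrite /lexlt /yexp /= (a_ltE Ha) // (a_eqE Ha) //; lia.
Qed.

Lemma yexp_eq (R : realType) n (a : nat -> R) i j :
  (forall i, (i <= n)%N -> a i < a i.+1) ->
  (i < (n.+1).*2)%N -> (j < (n.+1).*2)%N -> (yexp a i == yexp a j) = (i == j).
Proof.
move=> Ha hi hj; have [_ h2] := half_bound hi; have [_ h3] := half_bound hj.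
rewrite /yexp xpair_eqE (a_eqE Ha) //; lia.
Qed.

Lemma lexlt_irr (R : realType) (p : R * bool) : ~~ lexlt p p.
Proof. by rewrite /lexlt ltxx eqxx /=; case: p.2. Qed.

Lemma lexlt_trans (R : realType) (p1 p2 p3 : R * bool) :
  lexlt p1 p2 -> lexlt p2 p3 -> lexlt p1 p3.
Proof.
case: p1 p2 p3 => x1 s1 [x2 s2] [x3 s3]; rewrite /lexlt /=.
case/orP => [h1|/and3P [/eqP e1 n1 b2]]; case/orP => [h2|/and3P [/eqP e2 n2 b3]].
- by rewrite (lt_trans h1 h2).
- by rewrite -e2 h1.
- by rewrite e1 h2.
- by rewrite b2 in n2.
Qed.

Lemma branch_ends (R : realType) n h (a : nat -> R) (rho vrho : 'I_n -> R)
  (g : {perm 'I_n}) (k : 'I_n) :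
  (forall i, (i <= n)%N -> a i < a i.+1) -> (h <= n)%N ->
  fmap rho vrho (g k) @` [set x | a 0%N <= x <= a n.+1]
                    = [set x | lapL h a k <= x <= lapR h a k] ->
  if 0 < rho (g k) then
    rho (g k) * a 0%N + vrho (g k) = lapL h a k /\ rho (g k) * a n.+1 + vrho (g k) = lapR h a k
  else
    rho (g k) * a 0%N + vrho (g k) = lapR h a k /\ rho (g k) * a n.+1 + vrho (g k) = lapL h a k.
Proof.
move=> Ha hn E.
have hl := lapli_le k hn.
have a0n : a 0%N < a n.+1 by apply: (a_lt Ha).
have LR : lapL h a k < lapR h a k by rewrite /lapL /lapR (a_ltE Ha) //; lia.
have inimg : forall x, a 0%N <= x <= a n.+1 -> lapL h a k <= rho (g k) * x + vrho (g k) <= lapR h a k.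
  move=> x hx; have : [set x | lapL h a k <= x <= lapR h a k] (fmap rho vrho (g k) x).
    by rewrite -E; exists x.
  by [].
have preL : exists2 x, a 0%N <= x <= a n.+1 & rho (g k) * x + vrho (g k) = lapL h a k.
  have : [set x | lapL h a k <= x <= lapR h a k] (lapL h a k) by rewrite /= lexx (ltW LR).
  by rewrite -E => -[x hx <-]; exists x.
have preR : exists2 x, a 0%N <= x <= a n.+1 & rho (g k) * x + vrho (g k) = lapR h a k.
  have : [set x | lapL h a k <= x <= lapR h a k] (lapR h a k) by rewrite /= lexx (ltW LR).
  by rewrite -E => -[x hx <-]; exists x.
have /andP[i01 i02] := inimg (a 0%N) (ltac:(by rewrite lexx (ltW a0n))).
have /andP[i11 i12] := inimg (a n.+1) (ltac:(by rewrite lexx (ltW a0n))).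
case: preL => xL /andP[xL1 xL2] eL; case: preR => xR /andP[xR1 xR2] eR.
case: ifP => hr.
- split.
  + have : rho (g k) * a 0%N <= rho (g k) * xL by rewrite ler_pM2l.
    lra.
  + have : rho (g k) * xR <= rho (g k) * a n.+1 by rewrite ler_pM2l.
    lra.
- have hr' : rho (g k) <= 0 by rewrite leNgt hr.
  split.
  + have : rho (g k) * xR <= rho (g k) * a 0%N by rewrite ler_wnM2l.
    lra.
  + have : rho (g k) * a n.+1 <= rho (g k) * xL by rewrite ler_wnM2l.
    lra.
Qed.

Lemma Fder_pos (R : realType) n (rho : 'I_n -> R) (g : {perm 'I_n}) k :
  (0 < Fder rho g k) = (0 < rho (g k)).
Proof. by rewrite /Fder invr_gt0. Qed.

Lemma yexp0 (R : realType) (a : nat -> R) : yexp a 0 = (a 0%N, true).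
Proof. by []. Qed.

Lemma yexpN (R : realType) n (a : nat -> R) : yexp a n.*2.+1 = (a n.+1, false).
Proof.
rewrite /yexp; have -> : (odd n.*2.+1 + (n.*2.+1)./2 = n.+1)%N by lia.
by have -> : odd n.*2.+1 = true by lia.
Qed.

Lemma Fimg_yexp (R : realType) n h (a : nat -> R) (rho vrho : 'I_n -> R)
  (g : {perm 'I_n}) (k : 'I_n) i :
  (forall i, (i <= n)%N -> a i < a i.+1) -> (h <= n)%N ->
  (forall i, 0 < `|rho i| < 1) ->
  fmap rho vrho (g k) @` [set x | a 0%N <= x <= a n.+1]
                    = [set x | lapL h a k <= x <= lapR h a k] ->
  lapli h k = i./2 ->
  Fimg rho vrho g k (yexp a i) =
    if (0 < Fder rho g k) == odd i then yexp a n.*2.+1 else yexp a 0.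
Proof.
move=> Ha hn Hr E hk.
have := branch_ends Ha hn E.
have r0 : rho (g k) != 0 by have /andP[+ _] := Hr (g k); rewrite normr_gt0.
have ptE : (odd i + i./2 = if odd i then (lapli h k).+1 else lapli h k)%N.
  by rewrite hk; case: (odd i).
rewrite yexpN yexp0 /Fimg /Fbr /yexp /= Fder_pos ptE.
case: ifP => hr [e1 e2]; case: (odd i) => /=;
  rewrite -?[a (lapli h k).+1]/(lapR h a k) -?[a (lapli h k)]/(lapL h a k).
- by rewrite -e2; congr (_, _); field.
- by rewrite -e1; congr (_, _); field.
- by rewrite -e1; congr (_, _); field.
- by rewrite -e2; congr (_, _); field.
Qed.

Lemma lapof_yexp (R : realType) n h (a : nat -> R) i :
  (forall i, (i <= n)%N -> a i < a i.+1) -> (h <= n)%N ->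
  (i < (n.+1).*2)%N -> lapof n h a (yexp a i) = cl h i./2.
Proof.
move=> Ha hn hi; rewrite /lapof /cl; apply: eq_pick => k /=.
exact: inlapb_yexp.
Qed.

Lemma normp_yexp (R : realType) n (a : nat -> R) i :
  (i < (n.+1).*2)%N -> normp n a (yexp a i) = yexp a i.
Proof.
move=> hi; have [_ h2] := half_bound hi.
rewrite /normp /is_a; case: ifP => // /negP []; apply/hasP.
by exists (odd i + i./2)%N => //; rewrite mem_iota; lia.
Qed.

Lemma osend_iff (R : realType) n (a : nat -> R) e :
  osend n a e <-> exists2 i, (i < (n.+1).*2)%N & yexp a i = e.
Proof.
split.
- case=> [[k [hk ->]]|[k [hk ->]]].
  + exists k.*2.-1; first lia.
    rewrite /yexp; have -> : (odd k.*2.-1 + (k.*2.-1)./2 = k)%N by lia.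
    by have -> : odd k.*2.-1 = true by lia.
  + exists k.*2; first lia.
    rewrite /yexp; have -> : (odd k.*2 + (k.*2)./2 = k)%N by lia.
    by have -> : odd k.*2 = false by lia.
- case=> i hi <-; rewrite /osend /yexp; case hodd: (odd i).
  + left; exists (odd i + i./2)%N; split; last by rewrite hodd.
    have [_ h2] := half_bound hi; lia.
  + right; exists (odd i + i./2)%N; split; last by rewrite hodd.
    have [h1 h2] := half_bound hi; lia.
Qed.

Lemma Fstep_yexp (R : realType) n h (a : nat -> R) (rho vrho : 'I_n -> R)
  (g : {perm 'I_n}) i p :
  (forall i, (i <= n)%N -> a i < a i.+1) -> (h <= n)%N ->
  (forall i, 0 < `|rho i| < 1) ->
  (forall k : 'I_n, fmap rho vrho (g k) @` [set x | a 0%N <= x <= a n.+1]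
                    = [set x | lapL h a k <= x <= lapR h a k]) ->
  (i < (n.+1).*2)%N -> Fstep h a rho vrho g (yexp a i) = Some p ->
  exists2 j, (j < (n.+1).*2)%N & yexp a j = p.
Proof.
move=> Ha hn Hr Himg hi; rewrite /Fstep lapof_yexp //.
case E: (cl h i./2) => [k|] // [<-].
rewrite (Fimg_yexp Ha hn Hr (Himg k) (cl_some E)).
by case: ifP => _; [exists n.*2.+1; first lia | exists 0%N].
Qed.

Lemma Forbit_yexp (R : realType) n h (a : nat -> R) (rho vrho : 'I_n -> R)
  (g : {perm 'I_n}) i p :
  (forall i, (i <= n)%N -> a i < a i.+1) -> (h <= n)%N ->
  (forall i, 0 < `|rho i| < 1) ->
  (forall k : 'I_n, fmap rho vrho (g k) @` [set x | a 0%N <= x <= a n.+1]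
                    = [set x | lapL h a k <= x <= lapR h a k]) ->
  (i < (n.+1).*2)%N -> Forbit h a rho vrho g (yexp a i) p ->
  exists2 j, (j < (n.+1).*2)%N & yexp a j = p.
Proof.
move=> Ha hn Hr Himg hi [m]; elim: m p => [|m IH] p.
  by rewrite /Fiterate /= => -[<-]; exists i.
rewrite /Fiterate iterS -/(Fiterate h a rho vrho g m (yexp a i)).
case E: (Fiterate h a rho vrho g m (yexp a i)) => [p'|] //= Hs.
have [j hj ej] := IH p' E.
by apply: (Fstep_yexp Ha hn Hr Himg hj); rewrite ej.
Qed.

Lemma Ent_iff (R : realType) n h (a : nat -> R) (rho vrho : 'I_n -> R)
  (g : {perm 'I_n}) p :
  (forall i, (i <= n)%N -> a i < a i.+1) -> (h <= n)%N ->
  (forall i, 0 < `|rho i| < 1) ->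
  (forall k : 'I_n, fmap rho vrho (g k) @` [set x | a 0%N <= x <= a n.+1]
                    = [set x | lapL h a k <= x <= lapR h a k]) ->
  Ent h a rho vrho g p <-> exists2 i, (i < (n.+1).*2)%N & yexp a i = p.
Proof.
move=> Ha hn Hr Himg; split.
- case=> e [p0 [/osend_iff [i hi <-] [Ho ->]]].
  have [j hj <-] := Forbit_yexp Ha hn Hr Himg hi Ho.
  by exists j => //; rewrite normp_yexp.
- case=> i hi <-; exists (yexp a i), (yexp a i); split; first by apply/osend_iff; exists i.
  split; first by exists 0%N.
  by rewrite normp_yexp.
Qed.

Lemma Pos_iff (R : realType) n h (a : nat -> R) (rho vrho : 'I_n -> R)
  (g : {perm 'I_n}) x :
  (forall i, (i <= n)%N -> a i < a i.+1) -> (h <= n)%N ->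
  (forall i, 0 < `|rho i| < 1) ->
  (forall k : 'I_n, fmap rho vrho (g k) @` [set x | a 0%N <= x <= a n.+1]
                    = [set x | lapL h a k <= x <= lapR h a k]) ->
  Pos h a rho vrho g x <-> exists2 i, (i <= n.+1)%N & a i = x.
Proof.
move=> Ha hn Hr Himg; split.
- case=> p [/(Ent_iff _ Ha hn Hr Himg) [i hi <-] <-].
  have [_ h2] := half_bound hi.
  by exists (odd i + i./2)%N.
- case=> i hi <-.
  have [j hj ej] : exists2 j, (j < (n.+1).*2)%N & (odd j + j./2)%N = i.
    case: i hi => [|i] hi; first by exists 0%N.
    by exists i.*2.+1; lia.
  exists (yexp a j); split; last by rewrite /yexp /= ej.
  by apply/(Ent_iff _ Ha hn Hr Himg); exists j.
Qed.


Ltac bool_bash :=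
  repeat match goal with
  | |- context [nat_of_bool ?b] =>
      lazymatch b with true => fail | false => fail | _ =>
        let H := fresh "Hb" in case: (boolP b) => H; [rewrite ?H | rewrite ?(negbTE H)] end
  end.

Lemma corr_yexp (R : realType) n (a : nat -> R) l i j t :
  (forall i, (i <= n)%N -> a i < a i.+1) ->
  (1 <= l <= n)%N -> (i < (n.+1).*2)%N -> (j < (n.+1).*2)%N -> (t < (n.+1).*2)%N ->
  corr a l (yexp a i) (yexp a j) (yexp a t) =
  if (j < t)%N then
    (if ~~ (l.*2.-1 < j)%N && (l.*2.-1 < t)%N then (i == l.*2.-1)%:R - (i == l.*2)%:R else 0)
  else if (t < j)%N then
    (if (t < l.*2)%N && ~~ (j < l.*2)%N then (i == l.*2)%:R - (i == l.*2.-1)%:R else 0)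
  else 0.
Proof.
move=> Ha hl hi hj ht.
have em : (a l, false) = yexp a l.*2.-1.
  rewrite /yexp; have -> : (odd l.*2.-1 + (l.*2.-1)./2 = l)%N by lia.
  by have -> : odd l.*2.-1 = true by lia.
have ep : (a l, true) = yexp a l.*2.
  rewrite /yexp; have -> : (odd l.*2 + (l.*2)./2 = l)%N by lia.
  by have -> : odd l.*2 = false by lia.
have b1 : (l.*2.-1 < (n.+1).*2)%N by lia.
have b2 : (l.*2 < (n.+1).*2)%N by lia.
rewrite /corr em ep !(lexlt_yexp Ha) // !(yexp_eq Ha) //.
Qed.

Lemma sumE1 (R : pzRingType) n i (F : nat -> R) :
  \sum_(1 <= l < n.+1) ((i == l.*2)%:R * F l)
  = (~~ odd i && (1 <= i./2 <= n)%N)%:R * F i./2.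
Proof.
rewrite (eq_big_nat _ _ (F2 := fun l => (l == i./2)%:R * ((~~ odd i)%:R * F l))); last first.
  move=> l hl; rewrite mulrA -natrM mulnb.
  by have -> : (i == l.*2) = (l == i./2) && ~~ odd i by apply/idP/idP; lia.
rewrite sum_ind mulrA -natrM mulnb.
by have -> : (1 <= i./2 < n.+1)%N && ~~ odd i = ~~ odd i && (1 <= i./2 <= n)%N by lia.
Qed.

Lemma sumE2 (R : pzRingType) n i (F : nat -> R) :
  \sum_(1 <= l < n.+1) ((i == l.*2.-1)%:R * F l)
  = (odd i && (i./2 < n)%N)%:R * F i./2.+1.
Proof.
rewrite (eq_big_nat _ _ (F2 := fun l => (l == i./2.+1)%:R * ((odd i)%:R * F l))); last first.
  move=> l hl; rewrite mulrA -natrM mulnb.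
  by have -> : (i == l.*2.-1) = (l == i./2.+1) && odd i by apply/idP/idP; lia.
rewrite sum_ind mulrA -natrM mulnb.
by have -> : (1 <= i./2.+1 < n.+1)%N && odd i = odd i && (i./2 < n)%N by lia.
Qed.

Ltac fin := bool_bash; rewrite /= ?mulr1n ?mulr0n ?mul1r ?mul0r ?mulr1 ?mulr0;
  try (exfalso; lia); lra.

Definition uvec (R : pzRingType) (p i : nat) : R :=
  if odd i then - (i./2 < p)%N%:R else (i./2 <= p)%N%:R.
Definition dvec (R : pzRingType) (i : nat) : R := if odd i then 1 else -1.

Lemma vcol0 (R : realType) n (a : nat -> R) i j :
  (forall i, (i <= n)%N -> a i < a i.+1) ->
  (i < (n.+1).*2)%N -> (j < (n.+1).*2)%N ->
  (yexp a i == yexp a 0)%:R + \sum_(1 <= l < n.+1) corr a l (yexp a i) (yexp a j) (yexp a 0)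
  = uvec R j./2 i.
Proof.
move=> Ha hi hj; rewrite (yexp_eq Ha) //.
rewrite (eq_big_nat _ _ (F2 := fun l => (i == l.*2)%:R * (l.*2 <= j)%N%:R
          - (i == l.*2.-1)%:R * (l.*2 <= j)%N%:R)); last first.
  move=> l hl; rewrite (corr_yexp Ha); try lia.
  repeat (case: ifP => ?); fin.
rewrite big_split /= sumrN.
rewrite sumE1 sumE2 /uvec.
case: (boolP (odd i)) => ho; fin.
Qed.

Lemma vcolN (R : realType) n (a : nat -> R) i j :
  (forall i, (i <= n)%N -> a i < a i.+1) ->
  (i < (n.+1).*2)%N -> (j < (n.+1).*2)%N ->
  (yexp a i == yexp a n.*2.+1)%:R
    + \sum_(1 <= l < n.+1) corr a l (yexp a i) (yexp a j) (yexp a n.*2.+1)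
  = dvec R i + uvec R j./2 i.
Proof.
move=> Ha hi hj; have hN : (n.*2.+1 < (n.+1).*2)%N by lia.
rewrite (yexp_eq Ha) //.
rewrite (eq_big_nat _ _ (F2 := fun l => (i == l.*2.-1)%:R * (j <= l.*2.-1)%N%:R
          - (i == l.*2)%:R * (j <= l.*2.-1)%N%:R)); last first.
  move=> l hl; rewrite (corr_yexp Ha) //; try lia.
  repeat (case: ifP => ?); fin.
rewrite big_split /= sumrN sumE1 sumE2 /uvec /dvec.
case: (boolP (odd i)) => ho; fin.
Qed.


Definition wtc (R : realType) n h (rho : 'I_n -> R) (g : {perm 'I_n}) beta (c : nat) : R :=
  if @cl n h c is Some k then wt rho g beta k else 0.
Definition wc (R : realType) n h (rho : 'I_n -> R) (g : {perm 'I_n}) beta (c : nat) : R :=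
  if @cl n h c is Some k then `|Fder rho g k| `^ (- beta) else 0.
Definition dco (R : realType) n h (rho : 'I_n -> R) (g : {perm 'I_n}) beta (j : nat) : R :=
  if @cl n h j./2 is Some k then
    (if (0 < Fder rho g k) == odd j then wt rho g beta k else 0) else 0.

Definition Pwf (R : realType) (i k : nat) : R :=
  if k == 0%N then dvec R i else uvec R k.-1 i.
Definition Mf (R : realType) n h (rho : 'I_n -> R) (g : {perm 'I_n}) beta (k j : nat) : R :=
  if k == 0%N then dco h rho g beta j else (j./2 == k.-1)%:R * wtc h rho g beta k.-1.

Definition Pw (R : realType) n : 'M[R]_((n.+1).*2, n.+2) := \matrix_(i, k) Pwf R i k.
Definition Mm (R : realType) n h (rho : 'I_n -> R) (g : {perm 'I_n}) beta
  : 'M[R]_(n.+2, (n.+1).*2) := \matrix_(k, j) Mf h rho g beta k j.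

Lemma sum_single (R : realType) N (F : nat -> R) c :
  (c < N)%N -> \sum_(r < N) ((c == r)%:R * F r) = F c.
Proof.
move=> cN; rewrite -(big_mkord xpredT (fun r => (c == r)%:R * F r)).
rewrite (eq_big_nat _ _ (F2 := fun r => (r == c)%:R * F r)); last by move=> r _; rewrite eq_sym.
by rewrite sum_ind cN /= mul1r.
Qed.

Lemma V_eq (R : realType) n h (a : nat -> R) (rho vrho : 'I_n -> R)
  (g : {perm 'I_n}) beta :
  (forall i, (i <= n)%N -> a i < a i.+1) -> (h <= n)%N ->
  (forall i, 0 < `|rho i| < 1) ->
  (forall k : 'I_n, fmap rho vrho (g k) @` [set x | a 0%N <= x <= a n.+1]
                    = [set x | lapL h a k <= x <= lapR h a k]) ->
  Vmx h a rho vrho g beta (n.+1).*2 (yexp a) = Pw R n *m Mm h rho g beta.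
Proof.
move=> Ha hn Hr Himg; apply/matrixP => i j; rewrite !mxE big_ord_recl /= !mxE.
under eq_bigr => r _ do rewrite !mxE /=.
rewrite /Pwf /Mf /=.
under eq_bigr => r _ do rewrite add0n.
have hi := ltn_ord i; have hj := ltn_ord j.
have [hj2 _] := half_bound hj.
under eq_bigr => r _ do rewrite mulrCA.
rewrite (@sum_single R n.+1 (fun r => uvec R r i * wtc h rho g beta r) j./2) //.
rewrite lapof_yexp // /dco /wtc.
case E: (cl h j./2) => [k|] /=; last by rewrite !mulr0 addr0.
rewrite (Fimg_yexp Ha hn Hr (Himg k) (cl_some E)).
case: ifP => hc.
- rewrite normp_yexp; last lia.
  rewrite (vcolN Ha) //; ring.
- rewrite normp_yexp; last lia.
  rewrite (vcol0 Ha) //; ring.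
Qed.

Lemma T_entry (R : realType) n h (rho : 'I_n -> R) (g : {perm 'I_n}) beta
  (k' k : 'I_n.+2) :
  (Mm h rho g beta *m Pw R n) k' k
  = \sum_(c < n.+1) (Mf h rho g beta k' c.*2 * Pwf R c.*2 k
                     + Mf h rho g beta k' c.*2.+1 * Pwf R c.*2.+1 k).
Proof.
rewrite !mxE; under eq_bigr => j _ do rewrite !mxE.
exact: (sum_pairs (fun j => Mf h rho g beta k' j * Pwf R j k) n.+1).
Qed.

Lemma T_rowS (R : realType) n h (rho : 'I_n -> R) (g : {perm 'I_n}) beta
  (k' k : 'I_n.+2) : (k' != 0 :> nat) ->
  (Mm h rho g beta *m Pw R n) k' k
  = wtc h rho g beta k'.-1 * (Pwf R (k'.-1).*2 k + Pwf R (k'.-1).*2.+1 k).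
Proof.
move=> hk'; rewrite T_entry /Mf (negbTE hk').
have h1 : forall c, (c.*2)./2 = c by move=> c; lia.
have h2 : forall c, (c.*2.+1)./2 = c by move=> c; lia.
under eq_bigr => c _ do rewrite h1 h2 -!mulrA -mulrDr eq_sym.
rewrite (@sum_single R n.+1 (fun c => wtc h rho g beta k'.-1 * Pwf R c.*2 k +
   wtc h rho g beta k'.-1 * Pwf R c.*2.+1 k) k'.-1) ?mulrDr //; have := ltn_ord k'; lia.
Qed.

Lemma T_lower (R : realType) n h (rho : 'I_n -> R) (g : {perm 'I_n}) beta
  (k' k : 'I_n.+2) : (k < k')%N -> (Mm h rho g beta *m Pw R n) k' k = 0.
Proof.
move=> hkk; rewrite T_rowS; last lia.
rewrite /Pwf; case: ifP => hk.
  by rewrite /dvec /= odd_double /= addNr mulr0.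
move/negbT: hk => hk.
rewrite /uvec /= odd_double /=.
have -> : ((k'.-1).*2./2 <= k.-1)%N = false by lia.
have -> : ((k'.-1).*2.+1./2 < k.-1)%N = false by lia.
by rewrite /= oppr0 addr0 mulr0.
Qed.

Lemma T_diagS (R : realType) n h (rho : 'I_n -> R) (g : {perm 'I_n}) beta
  (r : 'I_n.+1) : (Mm h rho g beta *m Pw R n) (lift ord0 r) (lift ord0 r) = wtc h rho g beta r.
Proof.
rewrite T_rowS; last by rewrite /= /bump /=.
rewrite /Pwf /= /bump /= add0n /uvec /= odd_double /=.
have -> : (r.*2./2 <= r)%N = true by lia.
have -> : (r.*2.+1./2 < r)%N = false by lia.
by rewrite /= oppr0 addr0 mulr1.
Qed.

Lemma T_diag0 (R : realType) n h (rho : 'I_n -> R) (g : {perm 'I_n}) beta :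
  (forall i, 0 < `|rho i| < 1) ->
  (Mm h rho g beta *m Pw R n) ord0 ord0 = \sum_(c < n.+1) wc h rho g beta c.
Proof.
move=> Hr; rewrite T_entry; apply: eq_bigr => c _.
have h1 : (c.*2)./2 = c by lia.
have h2 : (c.*2.+1)./2 = c by lia.
rewrite /Mf /Pwf /= /dco /dvec h1 h2 /= odd_double /wc /=.
case: (cl h c) => [k|]; last by rewrite !mul0r addr0.
have F0 : Fder rho g k != 0.
  by rewrite /Fder invr_eq0 -normr_gt0; case/andP: (Hr (g k)).
rewrite /wt; case: (ltrgtP 0 (Fder rho g k)) => hF /=;
  try (by move: F0; rewrite -hF eqxx);
  rewrite ?(gtr0_sg hF) ?(ltr0_sg hF); lra.
Qed.

Lemma det_T (R : realType) n h (rho : 'I_n -> R) (g : {perm 'I_n}) beta t :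
  (forall i, 0 < `|rho i| < 1) ->
  \det (1%:M - t *: (Pw R n *m Mm h rho g beta))
  = (1 - t * \sum_(c < n.+1) wc h rho g beta c)
    * \prod_(r < n.+1) (1 - t * wtc h rho g beta r).
Proof.
move=> Hr; rewrite scalemxAl sylvester -scalemxAr -det_tr det_trig; last first.
  apply/is_trig_mxP => i j hij; rewrite !mxE.
  have := @T_lower R n h rho g beta j i hij; rewrite mxE => ->.
  have -> : (j == i) = false by apply/negbTE; rewrite neq_ltn hij orbT.
  by rewrite /= mulr0 subr0.
rewrite big_ord_recl.
have E : forall i : 'I_n.+2, (1%:M - t *: (Mm h rho g beta *m Pw R n))^T i i
   = 1 - t * (Mm h rho g beta *m Pw R n) i i.
  by move=> i; rewrite mxE [in LHS]mxE [in LHS]mxE mxE eqxx [X in _ - X]mxE.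
rewrite E T_diag0 //; congr (_ * _).
by apply: eq_bigr => r _; rewrite E T_diagS.
Qed.


Lemma prod_cells (R : realType) n h (rho : 'I_n -> R) (g : {perm 'I_n}) beta t :
  (h < n)%N ->
  \prod_(r < n.+1) (1 - t * wtc h rho g beta r) = \prod_(k < n) (1 - t * wt rho g beta k).
Proof.
move=> hn; have hN : (h < n.+1)%N by lia.
rewrite (bigD1_ord (Ordinal hN)) //=.
have -> : wtc h rho g beta h = 0.
  rewrite /wtc /cl; case: pickP => // k /eqP E.
  by have := lapli_neq h k; rewrite E eqxx.
rewrite mulr0 subr0 mul1r; apply: eq_bigr => k _.
by rewrite /= -lapli_bump /wtc clE.
Qed.

Lemma detK (R : realType) n (rho : 'I_n -> R) (g : {perm 'I_n}) beta t :
  \det (1%:M - t *: Kmx rho g beta) = \prod_(k < n) (1 - t * wt rho g beta k).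
Proof.
have -> : 1%:M - t *: Kmx rho g beta = diag_mx (\row_k (1 - t * wt rho g beta k)).
  apply/matrixP => i j; rewrite !mxE; case: eqVneq => [->|_] /=.
    by rewrite !mulr1n.
  by rewrite !mulr0n mulr0 subr0.
by rewrite det_diag; apply: eq_bigr => k _; rewrite mxE.
Qed.

Lemma detQ (R : realType) m (w : 'I_m -> R) (Q : 'M[R]_m) t :
  (forall i j, Q i j = w j) ->
  \det (1%:M - t *: Q) = 1 - t * \sum_(j < m) w j.
Proof.
move=> HQ.
have -> : Q = (const_mx 1 : 'M[R]_(m, 1)) *m (\row_j w j).
  apply/matrixP => i j; rewrite HQ !mxE big_ord1 !mxE mul1r.
  by [].
rewrite scalemxAl sylvester det_mx11 !mxE mulr_sumr; congr (_ - _).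
by apply: eq_bigr => j _; rewrite !mxE mulr1 mulrC.
Qed.

Lemma subset_branch (R : realType) n h (a : nat -> R) (rho vrho : 'I_n -> R)
  (g : {perm 'I_n}) (k : 'I_n) i :
  (forall i, (i <= n)%N -> a i < a i.+1) -> (h <= n)%N ->
  (forall i, 0 < `|rho i| < 1) ->
  fmap rho vrho (g k) @` [set x | a 0%N <= x <= a n.+1]
                    = [set x | lapL h a k <= x <= lapR h a k] ->
  (i <= n)%N ->
  [set x | a i < x < a i.+1] `<=`
    [set Fbr rho vrho g k x | x in [set x | a (lapli h k) < x < a (lapli h k).+1]].
Proof.
move=> Ha hn Hr E hi x /andP [x1 x2].
have r0 : rho (g k) != 0 by have /andP[+ _] := Hr (g k); rewrite normr_gt0.
have ai : a 0%N <= a i by rewrite (a_leE Ha) //; lia.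
have ai1 : a i.+1 <= a n.+1 by rewrite (a_leE Ha) //; lia.
have xa0 : a 0%N < x by apply: le_lt_trans ai x1.
have xan : x < a n.+1 by apply: lt_le_trans x2 ai1.
exists (rho (g k) * x + vrho (g k)); last by rewrite /Fbr; field.
have := branch_ends Ha hn E; rewrite /lapL /lapR /=.
case: ifP => hr [e1 e2].
- have h1 : rho (g k) * a 0%N < rho (g k) * x by rewrite ltr_pM2l.
  have h2 : rho (g k) * x < rho (g k) * a n.+1 by rewrite ltr_pM2l.
  apply/andP; split; lra.
- have hr' : rho (g k) < 0 by rewrite lt_neqAle r0 /= leNgt hr.
  have h1 : rho (g k) * x < rho (g k) * a 0%N by rewrite ltr_nM2l.
  have h2 : rho (g k) * a n.+1 < rho (g k) * x by rewrite ltr_nM2l.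
  apply/andP; split; lra.
Qed.

Lemma Q_entry (R : realType) n h (a : nat -> R) (rho vrho : 'I_n -> R)
  (g : {perm 'I_n}) beta (i j : 'I_n.+1) :
  (forall i, (i <= n)%N -> a i < a i.+1) -> (h <= n)%N ->
  (forall i, 0 < `|rho i| < 1) ->
  (forall k : 'I_n, fmap rho vrho (g k) @` [set x | a 0%N <= x <= a n.+1]
                    = [set x | lapL h a k <= x <= lapR h a k]) ->
  Qmx h a rho vrho g beta n.+1 a i j = wc h rho g beta j.
Proof.
move=> Ha hn Hr Himg; rewrite mxE /Jlap /wc.
have hj := ltn_ord j; have hi := ltn_ord i.
have -> : [pick k : 'I_n | (lapL h a k <= a j) && (a j.+1 <= lapR h a k)] = cl h j.
  rewrite /cl; apply: eq_pick => k /=; have hl := lapli_le k hn.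
  rewrite /lapL /lapR !(a_leE Ha) //; lia.
case E: (cl h j) => [k|] //.
rewrite asboolT ?mul1r //.
have <- := cl_some E.
by apply: (subset_branch Ha hn Hr (Himg k)); lia.
Qed.


Lemma mono_lt (R : realType) m (z : nat -> R) :
  (forall i, (i < m)%N -> z i < z i.+1) ->
  forall i j, (i < j < m.+1)%N -> z i < z j.
Proof.
move=> Hz i; elim=> [|j IH] /andP [ij jm]; first by [].
rewrite ltnS leq_eqVlt in ij; case/orP: ij => [/eqP ->|ij]; first by apply: Hz; lia.
by apply: lt_trans (IH _) (Hz j _); [apply/andP; split; lia | lia].
Qed.

Theorem theorem1 (R : realType) (n h : nat) (a : nat -> R) (rho vrho : 'I_n -> R)
  (g : {perm 'I_n}) (beta : R) (q : nat) (y : nat -> R * bool)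
  (m : nat) (z : nat -> R) :
  (0 < h)%N -> (h < n)%N ->
  (forall i, (i <= n)%N -> a i < a i.+1) ->
  (forall i, 0 < `|rho i| < 1) ->
  (forall k : 'I_n, fmap rho vrho (g k) @` [set x | a 0%N <= x <= a n.+1]
                    = [set x | lapL h a k <= x <= lapR h a k]) ->
  (forall e, osend n a e -> finite_set (Forbit h a rho vrho g e)) ->
  (forall i j, (i < j < q)%N -> lexlt (y i) (y j)) ->
  (forall p, Ent h a rho vrho g p <-> exists2 i, (i < q)%N & y i = p) ->
  (forall i, (i < m)%N -> z i < z i.+1) ->
  (forall x, Pos h a rho vrho g x <-> exists2 i, (i <= m)%N & z i = x) ->
  forall t : R,
    \det (1%:M - t *: Vmx h a rho vrho g beta q y)
    = \det (1%:M - t *: Qmx h a rho vrho g beta m z)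
      * \det (1%:M - t *: Kmx rho g beta).
Proof.
move=> h0 hn Ha Hr Himg _ Hy HEnt Hz HPos t.
have hn' : (h <= n)%N by lia.
have [Eq Ey] : q = (n.+1).*2 /\ (forall i, (i < q)%N -> y i = yexp a i).
  apply: (@enum_unique _ (@lexlt R)).
  - exact: lexlt_irr.
  - exact: lexlt_trans.
  - exact: Hy.
  - by move=> i j /andP [ij jq]; rewrite (lexlt_yexp Ha) //; lia.
  - move=> p; split => H.
    + by apply/(Ent_iff _ Ha hn' Hr Himg); apply/HEnt.
    + by apply/HEnt; apply/(Ent_iff _ Ha hn' Hr Himg).
have [Em Ez] : m.+1 = n.+2 /\ (forall i, (i < m.+1)%N -> z i = a i).
  apply: (@enum_unique _ (fun x y : R => x < y)).
  - by move=> x; rewrite ltxx.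
  - by move=> x1 x2 x3; apply: lt_trans.
  - exact: mono_lt.
  - by move=> i j /andP [ij jn]; apply: (a_lt Ha).
  - move=> x; split => H.
    + have /(Pos_iff _ Ha hn' Hr Himg) [i hi <-] : Pos h a rho vrho g x by apply/HPos.
      by exists i.
    + apply/HPos; apply/(Pos_iff _ Ha hn' Hr Himg); exact: H.
case: Em => Em; subst q m.
have EV : Vmx h a rho vrho g beta (n.+1).*2 y = Vmx h a rho vrho g beta (n.+1).*2 (yexp a).
  apply/matrixP => i j; rewrite !mxE (Ey i) // (Ey j) //.
have EQ : Qmx h a rho vrho g beta n.+1 z = Qmx h a rho vrho g beta n.+1 a.
  apply/matrixP => i j; have hi := ltn_ord i; have hj := ltn_ord j.
  by rewrite !mxE /Jlap !Ez //; lia.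
rewrite EV EQ (V_eq beta Ha hn' Hr Himg) det_T //.
rewrite (@detQ R n.+1 (fun j => wc h rho g beta j)); last first.
  by move=> i j; apply: Q_entry.
by rewrite detK prod_cells.
Qed.
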